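(* Let $M\subseteq\mathbb{C}^2$ be a set of pairwise distinct vectors, let $\mu:\mathbb{C}^2\otimes\mathbb{C}^2\to\mathbb{C}^2$ be a linear map that is associative, i.e. $\mu\circ(\mu\otimes\mathrm{id}) = \mu\circ(\mathrm{id}\otimes\mu)$, and let $e\in M$ be a unit for $\mu$, i.e. $\mu(e\otimes m) = m = \mu(m\otimes e)$ for all $m\in M$. Then the monoid $(M,\mu)$ is commutative: $\mu(a\otimes b) = \mu(b\otimes a)$ for all $a,b\in M$.
   Context: Such a triple $(M,\mu,e)$ is called a monoid over $\mathbb{H}=\mathbb{C}^2$. *)

(* Defs.v *)
From mathcomp Require Import all_boot all_algebra complex.
From mathcomp Require Import reals.
Set Implicit Arguments. Unset Strict Implicit. Unset Printing Implicit Defensive.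
Local Open Scope ring_scope.

(* The complex numbers are modelled as R[i] for R : realType (the reals).
   H = C^2 is the space of row vectors 'rV[R[i]]_2, and
   H (x) H = C^2 (x) C^2 is identified with 'rV[R[i]]_(2 * 2) via mxvec. *)
Notation H R := 'rV[R[i]]_2.
Notation HH R := 'rV[R[i]]_(2 * 2).

Definition tens (R : realType) (a b : H R) : HH R := mxvec (a^T *m b).

(* Main.v *)
Require Import Defs.
From mathcomp Require Import all_boot all_algebra complex.
From mathcomp Require Import reals.
From mathcomp Require Import ring.
Local Open Scope ring_scope.
Import GRing.Theory.

Section S.
Variable R : realType.
Variable mu : {linear HH R -> H R}.

Lemma tensDl (u v w : H R) : tens (u + v) w = tens u w + tens v w.
Proof. by rewrite /tens linearD /= mulmxDl linearD. Qed.
Lemma tensZl k (u w : H R) : tens (k *: u) w = k *: tens u w.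
Proof. by rewrite /tens linearZ /= -scalemxAl linearZ. Qed.
Lemma tensDr (u v w : H R) : tens w (u + v) = tens w u + tens w v.
Proof. by rewrite /tens mulmxDr linearD. Qed.
Lemma tensZr k (u w : H R) : tens w (k *: u) = k *: tens w u.
Proof. by rewrite /tens -scalemxAr linearZ. Qed.

Lemma keyL (e x y : H R) (al be ga : R[i]) :
  mu (tens e x) = x -> mu (tens x e) = x ->
  al *: e + be *: x + ga *: y = 0 ->
  ga *: (mu (tens x y) - mu (tens y x)) = 0.
Proof.
move=> h1 h2 hz.
have A : mu (tens x (al *: e + be *: x + ga *: y)) = 0.
  by rewrite hz /tens mulmx0 linear0 linear0.
have B : mu (tens (al *: e + be *: x + ga *: y) x) = 0.
  by rewrite hz /tens linear0 mul0mx linear0 linear0.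
rewrite !tensDr !tensZr !linearD !linearZ /= h2 in A.
rewrite !tensDl !tensZl !linearD !linearZ /= h1 in B.
rewrite scalerBr; apply/eqP; rewrite subr_eq0; apply/eqP.
apply: (@addIr _ (al *: x + be *: mu (tens x x))).
by rewrite [LHS]addrC [RHS]addrC A B.
Qed.

Lemma tens0l (w : H R) : mu (tens 0 w) = 0.
Proof. by rewrite /tens linear0 mul0mx linear0 linear0. Qed.
Lemma tens0r (w : H R) : mu (tens w 0) = 0.
Proof. by rewrite /tens mulmx0 linear0 linear0. Qed.

End S.

Definition D {R : realType} (u v : H R) := u 0 0 * v 0 1 - u 0 1 * v 0 0.

Lemma vec_eq {R : realType} (u v : H R) : u 0 0 = v 0 0 -> u 0 1 = v 0 1 -> u = v.
Proof.
move=> h0 h1; apply/rowP => i.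
case: i => [[|[|//]] Hi].
  by rewrite (_ : Ordinal Hi = 0) //; apply/val_inj.
by rewrite (_ : Ordinal Hi = 1) //; apply/val_inj.
Qed.

Theorem proposition4p2 (R : realType) (M : {pred H R})
  (mu : {linear HH R -> H R}) (e : H R) :
  (* associativity: mu o (mu (x) id) = mu o (id (x) mu), on elementary tensors *)
  (forall a b c : H R,
      mu (tens (mu (tens a b)) c) = mu (tens a (mu (tens b c)))) ->
  e \in M ->
  (forall m, m \in M -> mu (tens e m) = m /\ mu (tens m e) = m) ->
  forall a b, a \in M -> b \in M -> mu (tens a b) = mu (tens b a).
Proof.
move=> _ _ hU a b aM bM.
have [ha1 ha2] := hU a aM; have [hb1 hb2] := hU b bM.
have fin : forall g : R[i], g != 0 ->
    g *: (mu (tens a b) - mu (tens b a)) = 0 -> mu (tens a b) = mu (tens b a).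
  move=> g g0 /eqP; rewrite scaler_eq0 (negbTE g0) /= subr_eq0 => /eqP //.
have fin' : forall g : R[i], g != 0 ->
    g *: (mu (tens b a) - mu (tens a b)) = 0 -> mu (tens a b) = mu (tens b a).
  move=> g g0 /eqP; rewrite scaler_eq0 (negbTE g0) /= subr_eq0 => /eqP //.
have [Dea|Dea] := eqVneq (D e a) 0; last first.
  apply: (fin _ Dea); apply: (@keyL R mu e a b (D a b) (- D e b) _ ha1 ha2).
  by apply: vec_eq; rewrite !mxE /D;
    move: (a 0 0) (a 0 1) (b 0 0) (b 0 1) (e 0 0) (e 0 1) => ? ? ? ? ? ?; ring.
have [Deb|Deb] := eqVneq (D e b) 0; last first.
  apply: (fin' _ Deb); apply: (@keyL R mu e b a (D b a) (- D e a) _ hb1 hb2).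
  by apply: vec_eq; rewrite !mxE /D;
    move: (a 0 0) (a 0 1) (b 0 0) (b 0 1) (e 0 0) (e 0 1) => ? ? ? ? ? ?; ring.
move: Dea Deb; rewrite /D => /eqP; rewrite subr_eq0 => /eqP Dea /eqP; rewrite subr_eq0 => /eqP Deb.
have [e0|e0] := eqVneq (e 0 0) 0; last first.
  apply: (fin' _ e0); apply: (@keyL R mu e b a (- a 0 0) 0 _ hb1 hb2).
  by apply: vec_eq; rewrite !mxE ?Dea;
    move: (a 0 0) (a 0 1) (b 0 0) (b 0 1) (e 0 0) (e 0 1) => ? ? ? ? ? ?; ring.
have [e1|e1] := eqVneq (e 0 1) 0; last first.
  apply: (fin' _ e1); apply: (@keyL R mu e b a (- a 0 1) 0 _ hb1 hb2).
  by apply: vec_eq; rewrite !mxE -?Dea;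
    move: (a 0 0) (a 0 1) (b 0 0) (b 0 1) (e 0 0) (e 0 1) => ? ? ? ? ? ?; ring.
have E : e = 0 by apply: vec_eq; rewrite !mxE.
by rewrite -ha1 E !tens0l tens0r.
Qed.
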